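(* Let $B\in\mathbb{R}^{n\times n}$ be symmetric and invertible, partitioned into $p\times p$ blocks $B_{st}\in\mathbb{R}^{n_s\times n_t}$, and let $\hat B$ be its strictly block upper triangular part ($\hat B_{st}=B_{st}$ if $s<t$, $0$ otherwise). For any $\beta\in(0,\frac1{\rho(B)})$ and $t\in[0,1]$, if $\lambda$ is an eigenvalue of $(\beta B)^{-1}(I_n+t\beta\hat B)$ with $\mathrm{Re}(\lambda)>0$, then $$\mathrm{Re}(\lambda)\ge\frac12+\frac{1-\beta\rho(B)}{\beta\rho(B)}>\frac12.$$
   Context: $n_1,\dots,n_p$ are positive integers with $\sum_sn_s=n$; $\rho(B)$ denotes the spectral radius of $B$. *)

(* Defs.v *)
From HB Require Import structures.
From mathcomp Require Import all_boot all_order all_algebra.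
From mathcomp Require Import complex.
Set Implicit Arguments. Unset Strict Implicit. Unset Printing Implicit Defensive.
Import Order.TTheory GRing.Theory Num.Theory.
Local Open Scope ring_scope.

Definition cplx_eigenvalue (R : rcfType) (n : nat) (A : 'M[R]_n) (l : R[i]) :=
  exists2 v : 'cV[R[i]]_n, v != 0 & map_mx (real_complex R) A *m v = l *: v.

Definition is_spectral_radius (R : rcfType) (n : nat) (A : 'M[R]_n) (r : R) :=
  (exists2 l, cplx_eigenvalue A l & `|l| = r%:C%C) /\
  (forall l, cplx_eigenvalue A l -> `|l| <= r%:C%C).

Definition strict_block_upper (R : rcfType) (p : nat) (ns : 'I_p -> nat)
  (B : 'M[R]_(\sum_(s < p) ns s)) : 'M[R]_(\sum_(s < p) ns s) :=
  mxblock (fun s t : 'I_p =>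
    if (s < t)%N then submxblock B s t else 0 : 'M[R]_(ns s, ns t)).

(* Main.v *)
Require Import Defs.
From HB Require Import structures.
From mathcomp Require Import all_boot all_order all_algebra.
From mathcomp Require Import complex.
From mathcomp Require Import spectral sesquilinear ring lra.
Set Implicit Arguments. Unset Strict Implicit. Unset Printing Implicit Defensive.
Import Order.TTheory GRing.Theory Num.Theory Num.Def.
Local Open Scope ring_scope.

Section Helpers.
Local Open Scope sesquilinear_scope.

Definition qf (R : rcfType) n (M : 'M[R[i]]_n) (v : 'cV[R[i]]_n) : R[i] :=
  \sum_i \sum_j (v i 0)^* * M i j * v j 0.
Definition nrm (R : rcfType) n (v : 'cV[R[i]]_n) : R[i] :=
  \sum_i (v i 0)^* * v i 0.

Lemma qf_mul (R : rcfType) n (M : 'M[R[i]]_n) v :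
  qf M v = ((map_mx conjC v^T) *m (M *m v)) 0 0.
Proof.
rewrite /qf !mxE; apply: eq_bigr => i _; rewrite !mxE big_distrr.
by apply: eq_bigr => j _; rewrite /= mulrA.
Qed.

Lemma nrm_mul (R : rcfType) n (v : 'cV[R[i]]_n) :
  nrm v = ((map_mx conjC v^T) *m v) 0 0.
Proof. by rewrite /nrm !mxE; apply: eq_bigr => i _; rewrite !mxE. Qed.

Lemma qfD (R : rcfType) n (M1 M2 : 'M[R[i]]_n) v :
  qf (M1 + M2) v = qf M1 v + qf M2 v.
Proof. by rewrite !qf_mul mulmxDl mulmxDr mxE. Qed.

Lemma qfZ (R : rcfType) n c (M : 'M[R[i]]_n) v :
  qf (c *: M) v = c * qf M v.
Proof. by rewrite !qf_mul -scalemxAl -scalemxAr mxE. Qed.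

Lemma qf1 (R : rcfType) n (v : 'cV[R[i]]_n) : qf 1%:M v = nrm v.
Proof. by rewrite qf_mul nrm_mul mul1mx. Qed.

Lemma nrm_ge0 (R : rcfType) n (v : 'cV[R[i]]_n) : 0 <= nrm v.
Proof.
by apply: sumr_ge0 => i _; rewrite mulrC -normCK exprn_ge0.
Qed.

Lemma nrm_gt0 (R : rcfType) n (v : 'cV[R[i]]_n) : v != 0 -> 0 < nrm v.
Proof.
move=> vn0; rewrite lt_def nrm_ge0 andbT; apply: contra vn0 => /eqP h.
apply/eqP/matrixP => i j; rewrite ord1 mxE.
have : \sum_i0 (v i0 0)^* * v i0 0 == 0 by apply/eqP.
rewrite psumr_eq0 => [/allP /(_ i (mem_index_enum _))|k _].
  by rewrite /= mulrC -normCK sqrf_eq0 normr_eq0 => /eqP.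
by rewrite mulrC -normCK exprn_ge0.
Qed.

Lemma delta_neq0 (K : nzRingType) n (k : 'I_n) : (delta_mx k 0 : 'cV[K]_n) != 0.
Proof.
apply/eqP => /matrixP /(_ k 0); rewrite !mxE !eqxx /= => /eqP.
by rewrite oner_eq0.
Qed.

Lemma rayleigh (R : rcfType) n (A : 'M[R[i]]_n) (r : R) :
  A \is hermsymmx ->
  (forall l (u : 'cV_n), u != 0 -> A *m u = l *: u -> `|l| <= r%:C%C) ->
  forall v, qf A v \is Num.real /\ `|qf A v| <= r%:C%C * nrm v.
Proof.
move=> hA hl v.
set P := spectralmx A; set d := spectral_diag A.
have PU : P *m P^t* = 1%:M by apply/unitarymxP/spectral_unitarymx.
have PU' : P^t* *m P = 1%:M by apply: mulmx1C.
have eA : A = P^t* *m diag_mx d *m P.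
  rewrite -invmx_unitary ?spectral_unitarymx //.
  exact/orthomx_spectralP/hermitian_normalmx.
have dreal : d \is a realmx by apply: hermitian_spectral_diag_real.
have dbound k : `|d 0 k| <= r%:C%C.
  set e : 'cV[R[i]]_n := delta_mx k 0.
  apply: (hl _ (P^t* *m e)).
    have : e != 0 by apply: delta_neq0.
    apply: contra => /eqP h.
    have -> : e = P *m (P^t* *m e) by rewrite mulmxA PU mul1mx.
    by rewrite h mulmx0.
  rewrite eA -!mulmxA (mulmxA P) PU mul1mx.
  rewrite scalemxAr; congr (_ *m _).
  rewrite mul_diag_mx /e; apply/matrixP => i j; rewrite !mxE.
  by case: (eqVneq i k) => [->|]; rewrite ?mulr1 ?mulr0.
set w := P *m v.
have ew : qf A v = \sum_k (w k 0)^* * d 0 k * w k 0.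
  rewrite qf_mul eA -!mulmxA.
  have -> : (map_mx conjC v^T) *m (P^t* *m (diag_mx d *m (P *m v)))
     = (map_mx conjC w^T) *m (diag_mx d *m w).
    by rewrite mulmxA /w trmx_mul map_mxM.
  rewrite mxE; apply: eq_bigr => k _; rewrite mul_diag_mx !mxE mulrA.
  done.
have en : nrm v = nrm w.
  rewrite !nrm_mul /w trmx_mul map_mxM -mulmxA (mulmxA _ P) PU' mul1mx.
  done.
have wr k : (w k 0)^* * d 0 k * w k 0 = d 0 k * `|w k 0| ^+ 2.
  rewrite normCK; set a := d 0 k; set b := w k 0; set c := b^*.
  by rewrite mulrAC [LHS]mulrC (mulrC c b).
split.
  rewrite ew; apply: rpred_sum => k _; rewrite wr rpredM //.
    by move/mxOverP: dreal; apply.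
  by rewrite realX // normr_real.
rewrite ew en /nrm mulr_sumr.
apply: le_trans (ler_norm_sum _ _ _) _; apply: ler_sum => k _.
rewrite wr normrM normrX normr_id (mulrC ((w k 0)^*)) -normCK.
by rewrite ler_wpM2r // exprn_ge0.
Qed.

Definition blk (R : rcfType) p (ns : 'I_p -> nat) (M : 'M[R[i]]_(\sum_(s < p) ns s)) :
  'M[R[i]]_(\sum_(s < p) ns s) :=
  \matrix_(i, j) if tagnat.sig1 i == tagnat.sig1 j then M i j else 0.
Definition bw (R : rcfType) p (ns : 'I_p -> nat) (v : 'cV[R[i]]_(\sum_(s < p) ns s))
  (s : 'I_p) : 'cV[R[i]]_(\sum_(s < p) ns s) :=
  \col_i (if tagnat.sig1 i == s then v i 0 else 0).

Lemma qf_blk (R : rcfType) p (ns : 'I_p -> nat) (M : 'M[R[i]]_(\sum_(s < p) ns s)) v :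
  \sum_s qf M (bw v s) = qf (blk M) v.
Proof.
rewrite /qf exchange_big /=; apply: eq_bigr => i _.
rewrite exchange_big /=; apply: eq_bigr => j _.
rewrite (bigD1 (tagnat.sig1 i)) //=.
rewrite [X in _ + X]big1 => [|s /negbTE hs]; last first.
  by rewrite !mxE eq_sym hs conjC0 !mul0r.
rewrite !mxE eqxx addr0 (eq_sym (tagnat.sig1 j)).
by case: ifP => _; rewrite ?mulr0 ?mul0r.
Qed.

Lemma blk1 (R : rcfType) p (ns : 'I_p -> nat) :
  blk (1%:M : 'M[R[i]]_(\sum_(s < p) ns s)) = 1%:M.
Proof.
apply/matrixP => i j; rewrite !mxE.
by case: (eqVneq i j) => [->|]; rewrite ?eqxx //; case: ifP.
Qed.

Lemma nrm_blk (R : rcfType) p (ns : 'I_p -> nat) (v : 'cV[R[i]]_(\sum_(s < p) ns s)) :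
  \sum_s nrm (bw v s) = nrm v.
Proof.
rewrite -qf1 -blk1 -qf_blk; apply: eq_bigr => s _; by rewrite qf1.
Qed.

Lemma sbuE (R : rcfType) p (ns : 'I_p -> nat) (B : 'M[R]_(\sum_(s < p) ns s)) a b :
  strict_block_upper B a b =
  if (tagnat.sig1 a < tagnat.sig1 b)%N then B a b else 0.
Proof.
rewrite /strict_block_upper /mxblock mxE; case: ifP => _; rewrite ?mxE //.
by rewrite !tagnat.sig2K.
Qed.

Lemma diagE (R : rcfType) p (ns : 'I_p -> nat) (B : 'M[R]_(\sum_(s < p) ns s)) :
  B^T = B ->
  map_mx (real_complex R) (B - strict_block_upper B - (strict_block_upper B)^T)
  = blk (map_mx (real_complex R) B).
Proof.
move=> hB; apply/matrixP => a b.
have h1 := sbuE B a b; have h2 := sbuE B b a.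
rewrite [strict_block_upper _ _ _]mxE in h1; rewrite [strict_block_upper _ _ _]mxE in h2.
rewrite !mxE h1 h2.
have hba : B b a = B a b by move/matrixP: hB => /(_ a b); rewrite mxE.
case: (ltngtP (tagnat.sig1 a) (tagnat.sig1 b)) => h.
- rewrite ifF; last by apply/negbTE; rewrite neq_ltn h.
  by rewrite subrr subr0 rmorph0.
- rewrite ifF; last by apply/negbTE; rewrite neq_ltn h orbT.
  by rewrite subr0 hba subrr rmorph0.
- have -> : tagnat.sig1 a == tagnat.sig1 b by apply/eqP/val_inj.
  by rewrite !subr0.
Qed.
End Helpers.

Lemma rc_real (R : rcfType) (x : R) : (x%:C)%C \is Num.real.
Proof. by rewrite complex_real. Qed.

Lemma qf_tr (R : rcfType) n (M : 'M[R]_n) v :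
  qf (map_mx (real_complex R) M)^T v = (qf (map_mx (real_complex R) M) v)^*.
Proof.
rewrite /qf rmorph_sum exchange_big /=; apply: eq_bigr => i _.
rewrite rmorph_sum; apply: eq_bigr => j _.
rewrite !rmorphM /= conjCK !mxE (conj_Creal (rc_real _)).
by ring.
Qed.

Lemma final_arith (R : rcfType) (n0 t beta rho hr dR bR lr : R) :
  0 < n0 -> 0 <= t -> t <= 1 -> 0 < beta -> 0 < rho -> beta * rho < 1 ->
  - (rho * n0) <= bR -> bR <= rho * n0 -> dR <= rho * n0 ->
  bR = hr + hr + dR -> n0 + t * beta * hr = lr * (beta * bR) -> 0 < lr ->
  1 / 2 + (1 - beta * rho) / (beta * rho) <= lr /\
  1 / 2 < 1 / 2 + (1 - beta * rho) / (beta * rho).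
Proof.
move=> n0p t0 t1 b0 r0 kb bl bu du ebr E l0.
set k := beta * rho.
have k0 : 0 < k by rewrite mulr_gt0.
split; last first.
  by rewrite ltrDl divr_gt0 // subr_gt0.
have E' : k * lr * bR = rho * n0 + t * k * hr.
  rewrite /k; transitivity ((lr * (beta * bR)) * rho); first ring.
  by rewrite -E; ring.
have hrl : - (rho * n0) <= hr by lra.
have tb : 0 <= t * beta by rewrite mulr_ge0 // ltW.
have h1 : t * beta * (- (rho * n0)) <= t * beta * hr by rewrite ler_wpM2l.
have h2 : t * beta * (rho * n0) <= beta * (rho * n0).
  have tb1 : t * beta <= beta by nra.
  have : 0 <= rho * n0 by rewrite mulr_ge0 ?ltW.
  nra.
have h3 : beta * (rho * n0) < n0.
  by rewrite mulrA -/k -[X in _ < X]mul1r ltr_pM2r.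
have bpos : 0 < bR.
  rewrite ltNge; apply/negP => hb.
  have hb' : beta * bR <= 0 by nra.
  have : lr * (beta * bR) <= 0 by nra.
  lra.
have f1 : 0 <= (rho * n0 - bR) * (1 - k * t / 2).
  apply: mulr_ge0; first lra.
  have : k * t <= 1 by nra.
  lra.
have f2 : 0 <= k * t * (rho * n0 - dR).
  apply: mulr_ge0; last by rewrite subr_ge0.
  by apply: mulr_ge0 => //; apply: ltW.
have f3 : 0 <= k * bR by rewrite mulr_ge0 ?ltW.
have N : 0 <= (k * lr - 1 + k / 2) * bR.
  have -> : (k * lr - 1 + k / 2) * bR
     = (rho * n0 - bR) * (1 - k * t / 2) + k * t * (rho * n0 - dR) / 2 + k * bR / 2.
    by rewrite mulrDl mulrBl E' ebr /k; field.
  lra.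
have key : 0 <= k * lr - 1 + k / 2 by nra.
have -> : 1 / 2 + (1 - k) / k = (1 - k / 2) / k by field; rewrite gt_eqF.
rewrite ler_pdivrMr //; lra.
Qed.

Theorem lemma13 (R : rcfType) (p : nat) (ns : 'I_p -> nat)
  (B : 'M[R]_(\sum_(s < p) ns s)) (rho beta t : R) (lambda : R[i]) :
  (forall s, (0 < ns s)%N) ->
  B^T = B ->
  B \in unitmx ->
  is_spectral_radius B rho ->
  0 < beta -> beta < 1 / rho ->
  0 <= t <= 1 ->
  cplx_eigenvalue
    (invmx (beta *: B) *m (1%:M + (t * beta) *: strict_block_upper B)) lambda ->
  0 < complex.Re lambda ->
  1 / 2 + (1 - beta * rho) / (beta * rho) <= complex.Re lambda /\
  1 / 2 < 1 / 2 + (1 - beta * rho) / (beta * rho).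
Proof.
move=> _ hB hBu [[l0 _ hl0] hrho] hb0 hbr /andP[ht0 ht1] [v vn0 hv] hre.
set A := map_mx (real_complex R) B.
set U := strict_block_upper B.
set Uc := map_mx (real_complex R) U.
set Dc := map_mx (real_complex R) (B - U - U^T).
have hA : A \is hermsymmx.
  apply/is_hermitianmxP; rewrite expr0 scale1r; apply/matrixP => i j.
  rewrite !mxE (conj_Creal (rc_real _)).
  by move/matrixP: hB => /(_ i j); rewrite mxE => ->.
have hl : forall l (u : 'cV_(\sum_(s < p) ns s)), u != 0 -> A *m u = l *: u ->
    `|l| <= rho%:C%C.
  by move=> l u u0 e; apply: hrho; exists u.
have rho0 : 0 <= rho by rewrite -ler0c -hl0 normr_ge0.
have rhop : 0 < rho.
  rewrite lt_def rho0 andbT; apply/eqP => r0; move: hbr.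
  by rewrite r0 div1r invr0 ltNge (ltW hb0).
have kb : beta * rho < 1 by rewrite -ltr_pdivlMr // div1r -[rho^-1]div1r.
rewrite map_mxM map_invmx in hv.
set W := map_mx (real_complex R) (beta *: B) in hv.
set X := map_mx (real_complex R) (1%:M + (t * beta) *: U) in hv.
have Wu : W \in unitmx by rewrite map_unitmx unitmxZ // unitfE gt_eqF.
have hX : X *m v = W *m (lambda *: v) by rewrite -hv -mulmxA mulKVmx.
have E : qf X v = lambda * qf W v.
  by rewrite !qf_mul hX -!scalemxAr mxE.
have EX : qf X v = nrm v + (t * beta)%:C%C * qf Uc v.
  by rewrite /X map_mxD map_mx1 map_mxZ qfD qfZ qf1.
have EW : qf W v = beta%:C%C * qf A v by rewrite /W map_mxZ qfZ.
have eA : A = Uc + Uc^T + Dc.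
  rewrite /A /Uc /Dc map_trmx -!map_mxD; congr (map_mx _ _).
  by rewrite [RHS]addrC -[B - U - U^T]addrA -opprD subrK.
have EA : qf A v = qf Uc v + (qf Uc v)^* + qf Dc v.
  by rewrite {1}eA !qfD qf_tr.
have [R1r R1n] := rayleigh hA hl v.
have hdr : qf Dc v \is Num.real.
  rewrite /Dc diagE // -qf_blk; apply: rpred_sum => s _.
  by case: (rayleigh hA hl (bw v s)).
have hd : qf Dc v <= rho%:C%C * nrm v.
  rewrite /Dc diagE // -qf_blk -nrm_blk mulr_sumr; apply: ler_sum => s _.
  have [r1 r2] := rayleigh hA hl (bw v s).
  exact: le_trans (real_ler_norm r1) r2.
have [n0 en0] : exists n0, nrm v = n0%:C%C.
  by apply/complex_realP/ger0_real/nrm_ge0.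
have n0p : 0 < n0.
  by move: (nrm_gt0 vn0); rewrite en0 -[0](rmorph0 (real_complex R)) ltcR.
have [bR eb] : exists bR, qf A v = bR%:C%C by apply/complex_realP.
have [dR ed] : exists dR, qf Dc v = dR%:C%C by apply/complex_realP.
have hbu : bR <= rho * n0.
  have := le_trans (real_ler_norm R1r) R1n.
  by rewrite eb en0 -rmorphM lecR.
have hbl : - (rho * n0) <= bR.
  have R1r' : - qf A v \is Num.real by rewrite rpredN.
  have := le_trans (real_ler_norm R1r'); rewrite normrN => /(_ _ R1n).
  rewrite eb en0 -rmorphM -rmorphN lecR; lra.
have hdu : dR <= rho * n0.
  by move: hd; rewrite ed en0 -rmorphM lecR.
move: EA E; rewrite EX EW en0 eb ed.
case: (qf Uc v) => hr hi EA E.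
have hh : (hr +i* hi)%C + (hr +i* hi)%C^* = (hr + hr)%:C%C.
  have := ReE (hr +i* hi)%C; rewrite -complexRe /= => e2.
  rewrite -[LHS](@divfK _ 2) ?pnatr_eq0 // -e2.
  by rewrite rmorphD mulr_natr mulr2n.
have ebr : bR = hr + hr + dR.
  by apply: complexI; rewrite EA hh -!rmorphD.
move: E hre; clear hX hv; case: lambda => lr li E /= hre.
have E2 : n0 + t * beta * hr = lr * (beta * bR).
  by move/(congr1 (@complex.Re R)): E; simpc.
exact: final_arith n0p ht0 ht1 hb0 rhop kb hbl hbu hdu ebr E2 hre.
Qed.
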